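(* Let $\mathfrak g$ be a finite-dimensional complex Lie algebra, $U\subset\mathfrak g^*\times\mathfrak g^*$ open, and $\lambda_1,\lambda_2:U\to\mathbb C$ locally analytic functions such that for every $(x,a)\in U$, $\lambda_1(x,a)$ and $\lambda_2(x,a)$ are distinct eigenvalues of the pencil $\mathcal A_x+\mu\mathcal A_a$. Then for $(x_0,a_0)$ in an open dense subset of $U$, $\frac{\partial\lambda_1}{\partial x}(x_0,a_0)\wedge\frac{\partial\lambda_2}{\partial x}(x_0,a_0)\neq0$.
   Context: For $x\in\mathfrak g^*$, $\mathcal A_x$ is the skew form $(\xi,\eta)\mapsto\langle x,[\xi,\eta]\rangle$ on $\mathfrak g$. A number $\lambda_0$ is an eigenvalue of the pencil $\mathcal A_x+\mu\mathcal A_a$ if $\operatorname{rk}(\mathcal A_x-\lambda_0\mathcal A_a)<\max_\mu\operatorname{rk}(\mathcal A_x+\mu\mathcal A_a)$. $\frac{\partial\lambda}{\partial x}$ denotes the differential with respect to $x\in\mathfrak g^*$ (an element of $\mathfrak g$). *)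

(* Defs.v *)
From HB Require Import structures.
From mathcomp Require Import all_boot all_order all_algebra.
From mathcomp Require Import complex.
From mathcomp Require Import all_classical all_reals all_analysis.
Set Implicit Arguments.
Unset Strict Implicit.
Unset Printing Implicit Defensive.
Import Order.TTheory GRing.Theory Num.Theory.
Import numFieldNormedType.Exports.
Local Open Scope ring_scope.
Local Open Scope classical_set_scope.

(* The field of complex numbers, built over a real field R (any realType is
   a model of the reals). *)
Definition cplx (R : realType) : numFieldType := R[i].

(* A Lie algebra g of dimension n is given on the basis e_0..e_{n-1} of
   'rV_n by structure constants c i j k: [e_i, e_j] = sum_k c i j k e_k. *)
Definition is_lie_structure (K : numFieldType) (n : nat)
  (c : 'I_n -> 'I_n -> 'I_n -> K) : Prop :=
  (forall i j k, c i j k = - c j i k) /\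
  (forall i j k m,
     \sum_(l < n) (c i j l * c l k m + c j k l * c l i m + c k i l * c l j m)
     = 0).

Definition lie_bracket (K : numFieldType) (n : nat)
  (c : 'I_n -> 'I_n -> 'I_n -> K) (u v : 'rV[K]_n) : 'rV[K]_n :=
  \row_k \sum_(i < n) \sum_(j < n) u 0 i * v 0 j * c i j k.

(* g^* is identified with 'rV_n through the dual basis: <x, xi> *)
Definition dual_pairing (K : numFieldType) (n : nat) (x xi : 'rV[K]_n) : K :=
  \sum_(k < n) x 0 k * xi 0 k.

(* Gram matrix of the skew form A_x (xi, eta) = <x, [xi, eta]> *)
Definition formA (K : numFieldType) (n : nat)
  (c : 'I_n -> 'I_n -> 'I_n -> K) (x : 'rV[K]_n) : 'M[K]_n :=
  \matrix_(i, j) dual_pairing x (lie_bracket c (delta_mx 0 i) (delta_mx 0 j)).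

(* l0 is an eigenvalue of the pencil A_x + mu A_a :
   rk (A_x - l0 A_a) < max_mu rk (A_x + mu A_a) *)
Definition pencil_eigenvalue (K : numFieldType) (n : nat)
  (c : 'I_n -> 'I_n -> 'I_n -> K) (x a : 'rV[K]_n) (l0 : K) : Prop :=
  exists mu : K,
    (\rank (formA c x - l0 *: formA c a)%R < \rank (formA c x + mu *: formA c a)%R)%N.

Definition pcoord (K : numFieldType) (n : nat) (p : 'rV[K]_n * 'rV[K]_n)
  (i : 'I_n + 'I_n) : K :=
  match i with inl k => p.1 0 k | inr k => p.2 0 k end.

(* a homogeneous polynomial of degree k in the 2n coordinates, given by
   coefficients on k-tuples of coordinate indices *)
Definition monom (K : numFieldType) (n k : nat) (t : k.-tuple ('I_n + 'I_n))
  (h : 'rV[K]_n * 'rV[K]_n) : K :=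
  \prod_(j < k) pcoord h (tnth t j).

Definition analytic_at (K : numFieldType) (n : nat)
  (F : 'rV[K]_n * 'rV[K]_n -> K) (p : 'rV[K]_n * 'rV[K]_n) : Prop :=
  exists r : K, 0 < r /\
  exists cf : forall k : nat, k.-tuple ('I_n + 'I_n) -> K,
  forall h : 'rV[K]_n * 'rV[K]_n,
    (forall i, `|pcoord h i| < r) ->
    (exists M : K, forall N : nat,
        \sum_(k < N) \sum_(t : k.-tuple ('I_n + 'I_n))
            `|cf k t| * `|monom t h| <= M) /\
    ((fun N : nat => \sum_(k < N) \sum_(t : k.-tuple ('I_n + 'I_n))
            cf k t * monom t h) @ \oo
        --> F (p.1 + h.1, p.2 + h.2)).

Definition locally_analytic (K : numFieldType) (n : nat)
  (U : set ('rV[K]_n * 'rV[K]_n)) (F : 'rV[K]_n * 'rV[K]_n -> K) : Prop :=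
  forall p, U p -> analytic_at F p.

(* d lambda / d x at p = (x, a): the differential of x |-> F (x, a) at x,
   a linear form on g^*, i.e. an element of g (coordinates in the basis e_k) *)
Definition dx (R : realType) (n : nat)
  (F : 'rV[cplx R]_n * 'rV[cplx R]_n -> cplx R)
  (p : 'rV[cplx R]_n * 'rV[cplx R]_n) : 'rV[cplx R]_n :=
  let x0 : 'rV[cplx R]_n := p.1 in
  let a0 : 'rV[cplx R]_n := p.2 in
  \row_k ('d (fun x : 'rV[cplx R]_n => F (x, a0)) x0 (delta_mx 0 k)).

(* u /\ v in Lambda^2 g, by its coordinates on the basis e_i /\ e_j
   (as an antisymmetric matrix) *)
Definition wedge2 (K : numFieldType) (n : nat) (u v : 'rV[K]_n) : 'M[K]_n :=
  \matrix_(i, j) (u 0 i * v 0 j - u 0 j * v 0 i).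

(* Main.v *)
Require Import Defs.
From HB Require Import structures.
From mathcomp Require Import all_boot all_order all_algebra.
From mathcomp Require Import complex.
From mathcomp Require Import all_classical all_reals all_analysis.
From mathcomp Require Import ring.
Import Order.TTheory GRing.Theory Num.Theory.
Import numFieldNormedType.Exports.
Local Open Scope ring_scope.
Local Open Scope classical_set_scope.

Set Implicit Arguments.
Unset Strict Implicit.
Unset Printing Implicit Defensive.


Lemma rank_mxsub_le (F : fieldType) m n m' n' (f : 'I_m' -> 'I_m) (g : 'I_n' -> 'I_n)
  (A : 'M[F]_(m, n)) : (\rank (mxsub f g A) <= \rank A)%N.
Proof.
have -> : mxsub f g A = rowsub f 1%:M *m (A *m colsub g 1%:M).
  by rewrite mulmx_colsub mulmx1 -rowsubE; apply/matrixP => i j; rewrite !mxE.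
apply: leq_trans (mxrankM_maxr _ _) _; exact: mxrankM_maxl.
Qed.

Lemma rank_minor (F : fieldType) m n (A : 'M[F]_(m, n)) :
  exists f : 'I_(\rank A) -> 'I_m, exists g : 'I_(\rank A) -> 'I_n,
    \det (mxsub f g A) != 0.
Proof.
set B := rowsub (maxrankfun A) A.
have fB : row_free B := maxrowsub_free A.
have fT : row_full B^T by rewrite /row_full mxrank_tr.
exists (maxrankfun A), (fullrankfun fT).
have U := fullrowsub_unit fT.
have E : rowsub (fullrankfun fT) B^T = (mxsub (maxrankfun A) (fullrankfun fT) A)^T.
  by apply/matrixP => i j; rewrite !mxE.
by rewrite E unitmxE det_tr unitfE in U.
Qed.

Lemma pencil_poly (F : fieldType) n (A B : 'M[F]_n) :
  exists P : {poly F}, P != 0 /\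
    forall l mu, (\rank (A - l *: B)%R < \rank (A + mu *: B)%R)%N -> P.[l] = 0.
Proof.
pose rk l := \rank (A - l *: B).
have [l0 Hl0] : exists l0, forall l, (rk l <= rk l0)%N.
  have exP : exists k, `[< exists l, rk l = k >] by exists (rk 0); apply/asboolP; exists 0.
  have ubP : forall k, `[< exists l, rk l = k >] -> (k <= n)%N.
    by move=> k /asboolP [l <-]; exact: rank_leq_row.
  case: (ex_maxnP exP ubP) => k /asboolP [l0 Hk] Hmax.
  exists l0 => l; rewrite Hk; apply: Hmax; apply/asboolP; by exists l.
have [f [g Hdet]] := rank_minor (A - l0 *: B).
pose M := \matrix_(i, j) (((mxsub f g A) i j)%:P - 'X * ((mxsub f g B) i j)%:P).
have ev l : (\det M).[l] = \det (mxsub f g (A - l *: B)).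
  rewrite -horner_evalE -det_map_mx; congr (\det _).
  apply/matrixP => i j; rewrite !mxE /=.
  by rewrite horner_evalE hornerD hornerN hornerM hornerX !hornerC mulrC.
exists (\det M); split.
  by apply/eqP => H; move: Hdet; rewrite -ev H horner0 eqxx.
move=> l mu Hlt; apply/eqP; apply/negPn/negP => Hn.
have : (\rank (A - l0 *: B)%R <= rk l)%N.
  have U : mxsub f g (A - l *: B) \in unitmx by rewrite unitmxE unitfE -ev.
  move: (rank_mxsub_le f g (A - l *: B)); rewrite -row_free_unit in U.
  by move/eqP: U => ->.
move=> H1.
have H2 : (\rank (A + mu *: B)%R <= rk l0)%N.
  by have := Hl0 (- mu); rewrite /rk scaleNr opprK.
have := leq_trans H2 H1; rewrite leqNgt Hlt //.
Qed.

Lemma horner_cvg (K : numFieldType) (p : {poly K}) (z : K) :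
  p.[x] @[x --> z] --> p.[z].
Proof.
elim/poly_ind: p => [|p c IH].
  have -> : (fun x => (0:{poly K}).[x]) = fun _ => 0 by apply/funext=> x; rewrite horner0.
  rewrite horner0; exact: (@cvg_cst _ (0:K) _ (nbhs z) _).
have -> : (fun x => (p * 'X + c%:P).[x]) = fun x => p.[x] * x + c.
  by apply/funext=> x; rewrite hornerMXaddC.
rewrite hornerMXaddC.
apply: cvgD; [exact: nbhs_filter | | exact: (@cvg_cst _ c _ (nbhs z) _)].
apply: cvgM; [exact: nbhs_filter | exact: IH | exact: cvg_id].
Qed.

Lemma poly_isolated (K : numFieldType) (P : {poly K}) (z0 : K) :
  P != 0 -> \forall z \near z0, P.[z] = 0 -> z = z0.
Proof.
move=> P0; have [m [q Hq EP]] := multiplicity_XsubC P z0.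
rewrite P0 /= /root in Hq.
have qc := @horner_cvg K q z0.
have qpos : 0 < `|q.[z0]| by rewrite normr_gt0.
have H := @cvgr_dist_lt _ _ _ _ _ _ _ qc _ qpos.
near=> z => Pz.
have Hz : `|q.[z0] - q.[z]| < `|q.[z0]|.
  near: z. exact: H.
have qz : q.[z] != 0.
  apply/eqP => qz0; move: Hz; rewrite qz0 subr0 ltxx //.
move: Pz; rewrite EP hornerM horner_exp hornerXsubC => /eqP.
rewrite mulf_eq0 (negbTE qz) /= expf_eq0 subr_eq0 => /andP [_ /eqP] //.
Unshelve. all: by end_near.
Qed.


Lemma formAD (K : numFieldType) n (c : 'I_n -> 'I_n -> 'I_n -> K) x y :
  formA c (x + y) = formA c x + formA c y.
Proof.
apply/matrixP => i j; rewrite !mxE /dual_pairing -big_split /=.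
by apply: eq_bigr => k _; rewrite mxE mulrDl.
Qed.

Lemma formAZ (K : numFieldType) n (c : 'I_n -> 'I_n -> 'I_n -> K) t x :
  formA c (t *: x) = t *: formA c x.
Proof.
apply/matrixP => i j; rewrite !mxE /dual_pairing mulr_sumr.
by apply: eq_bigr => k _; rewrite mxE mulrA.
Qed.

Lemma eig_shift (K : numFieldType) n (c : 'I_n -> 'I_n -> 'I_n -> K) x a s l :
  pencil_eigenvalue c (x + s *: a) a l -> pencil_eigenvalue c x a (l - s).
Proof.
move=> [mu H]; exists (s + mu); move: H.
rewrite formAD formAZ.
have -> : formA c x + s *: formA c a - l *: formA c a = formA c x - (l - s) *: formA c a.
  by rewrite scalerBl opprB addrA.
by rewrite -addrA -scalerDl.
Qed.

Lemma eig_scale (K : numFieldType) n (c : 'I_n -> 'I_n -> 'I_n -> K) x a t l :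
  t != 0 -> pencil_eigenvalue c (t *: x) a l -> pencil_eigenvalue c x a (l / t).
Proof.
move=> t0 [mu H]; exists (mu / t); move: H.
rewrite formAZ.
have e1 : t *: formA c x - l *: formA c a = t *: (formA c x - l / t *: formA c a).
  by rewrite scalerBr scalerA mulrCA mulfV // mulr1.
have e2 : t *: formA c x + mu *: formA c a = t *: (formA c x + mu / t *: formA c a).
  by rewrite scalerDr scalerA mulrCA mulfV // mulr1.
by rewrite e1 e2 !(eqmx_scale _ t0).
Qed.


Lemma mx_coord_le (K : numFieldType) m n (x : 'M[K]_(m, n)) i j :
  `|x i j| <= `|x|.
Proof.
change (`|x i j| <= mx_norm x).
rewrite mx_normE.
have -> : x i j = x (i, j).1 (i, j).2 by [].
rewrite -[leLHS]nngE num_le; exact: (le_bigmax _ _ (i, j)).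
Qed.

Lemma pcoord_slice_le (K : numFieldType) n (y : 'rV[K]_n) i :
  `|pcoord (y, 0) i| <= `|y|.
Proof.
case: i => k /=; first exact: mx_coord_le.
by rewrite mxE normr0 normr_ge0.
Qed.

Lemma monom_le (K : numFieldType) n k (t : k.-tuple ('I_n + 'I_n))
  (h : 'rV[K]_n * 'rV[K]_n) s :
  (forall i, `|pcoord h i| <= s) -> `|monom t h| <= s ^+ k.
Proof.
move=> Hs; rewrite /monom normr_prod.
have -> : s ^+ k = \prod_(j < k) s by rewrite prodr_const card_ord.
by apply: ler_prod => j _; rewrite normr_ge0 Hs.
Qed.

Definition lin1 (K : numFieldType) n (w : 1.-tuple ('I_n + 'I_n) -> K)
  (y : 'rV[K]_n) : K :=
  \sum_(t : 1.-tuple ('I_n + 'I_n)) w t * monom t (y, 0).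

Lemma pcoord_sliceD (K : numFieldType) n (a : K) (y z : 'rV[K]_n) i :
  pcoord (a *: y + z, 0) i = a * pcoord (y, 0) i + pcoord (z, 0) i.
Proof. by case: i => k /=; rewrite !mxE // mulr0 addr0. Qed.

Lemma lin1_is_linear (K : numFieldType) n (w : 1.-tuple ('I_n + 'I_n) -> K) :
  linear_for *:%R (lin1 w).
Proof.
move=> a y z; rewrite /lin1 /monom scaler_sumr -big_split /=.
apply: eq_bigr => t _; rewrite !big_ord1 pcoord_sliceD.
by rewrite mulrDr mulrCA.
Qed.

HB.instance Definition _ (K : numFieldType) n (w : 1.-tuple ('I_n + 'I_n) -> K) :=
  GRing.isLinear.Build K 'rV[K]_n K *:%R (lin1 w) (lin1_is_linear w).

Lemma lin1_le (K : numFieldType) n (w : 1.-tuple ('I_n + 'I_n) -> K) y :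
  `|lin1 w y| <= (\sum_t `|w t|) * `|y|.
Proof.
rewrite /lin1 mulr_suml; apply: le_trans (ler_norm_sum _ _ _) _.
apply: ler_sum => t _; rewrite normrM ler_wpM2l //.
by rewrite -[`|y|]expr1; apply: monom_le => i; exact: pcoord_slice_le.
Qed.

Lemma diff_from_quad (K : numFieldType) (V : normedModType K) (f : V -> K) x
  (L : {linear V -> K}) (C d : K) :
  0 < d -> 0 <= C -> (forall h, `|L h| <= C * `|h|) ->
  (forall h, `|h| < d -> `|f (h + x) - f x - L h| <= C * `|h| ^+ 2) ->
  differentiable f x.
Proof.
move=> d0 C0 HL HR.
have Lc : continuous L.
  apply/linear_bounded_continuous/bounded_funP => s.
  exists (C * s) => y ys; apply: le_trans (HL y) _; exact: ler_wpM2l.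
have Hs : f \o shift x = cst (f x) + L +o_ 0 id.
  apply/eqaddoP => eps eps0.
  have C1 : 0 < C + 1 by rewrite ltr_wpDl.
  near=> h.
  have hd : `|h| < d by near: h; exact: nbhs0_lt.
  have he : `|h| < eps / (C + 1) by near: h; apply: nbhs0_lt; rewrite divr_gt0.
  rewrite /= opprD addrA.
  apply: le_trans (HR h hd) _.
  apply: le_trans (_ : (C + 1) * `|h| ^+ 2 <= _).
    by rewrite ler_wpM2r ?exprn_ge0 // lerDl.
  rewrite expr2 mulrA ler_wpM2r //.
  by rewrite mulrC -ler_pdivlMr // ltW.
apply/diff_locallyP; rewrite (diff_unique Lc Hs); split => //.
Unshelve. all: by end_near.
Qed.

Lemma lim_norm_le (K : numFieldType) (u : nat -> K) l B :
  u @ \oo --> l -> 0 <= B -> (\forall N \near \oo, `|u N| <= B) -> `|l| <= B.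
Proof.
move=> ul B0 HB.
have rB : B \is Num.real by exact: ger0_real.
have rl : `|l| \is Num.real by exact: normr_real.
rewrite real_leNgt //; apply/negP => Hlt.
have e0 : 0 < `|l| - B by rewrite subr_gt0.
have H := @cvgr_dist_lt _ _ _ _ _ _ _ ul _ e0.
near \oo => N.
have h1 : `|l - u N| < `|l| - B by near: N; exact: H.
have h2 : `|u N| <= B by near: N; exact: HB.
have t1 := ler_normD (l - u N) (u N); rewrite subrK in t1.
have t2 := ltr_leD h1 h2; rewrite subrK in t2.
have := le_lt_trans t1 t2.
by rewrite ltxx.
Unshelve. all: by end_near.
Qed.

Lemma analytic_slice_diff (K : numFieldType) n (F : 'rV[K]_n * 'rV[K]_n -> K) x0 a0 :
  analytic_at F (x0, a0) -> differentiable (fun x => F (x, a0)) x0.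
Proof.
move=> [r [r0 [cf Hcf]]].
pose T k h := \sum_(t : k.-tuple ('I_n + 'I_n)) cf k t * monom t h.
pose rho := r / 2.
have rho0 : 0 < rho by rewrite divr_gt0.
have rhor : rho < r by rewrite /rho gtr_pMr // invf_lt1 // ltr1n.
pose hs : 'rV[K]_n * 'rV[K]_n := (const_mx rho, const_mx rho).
have Hhs : forall i, `|pcoord hs i| < r by case => k /=; rewrite mxE gtr0_norm.
have [[M HM] _] := Hcf hs Hhs.
have M0 : 0 <= M by have := HM 0%N; rewrite big_ord0.
have monhs : forall k (t : k.-tuple ('I_n + 'I_n)), `|monom t hs| = rho ^+ k.
  move=> k t; rewrite /monom normr_prod.
  have -> : \prod_(j < k) `|pcoord hs (tnth t j)| = \prod_(j < k) rho.
    by apply: eq_bigr => j _; case: (tnth t j) => i /=; rewrite mxE gtr0_norm.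
  by rewrite prodr_const card_ord.
have key : forall y : 'rV[K]_n, `|y| <= rho ->
    `|F (x0 + y, a0 + 0) - T 0%N (y, 0) - T 1%N (y, 0)| <= `|y| ^+ 2 / rho ^+ 2 * M.
  move=> y hy.
  have Hy : forall i, `|pcoord (y, 0) i| < r.
    by move=> i; apply: le_lt_trans (pcoord_slice_le y i) (le_lt_trans hy rhor).
  have [_ cv] := Hcf (y, 0) Hy.
  pose Tm k := if (k < 2)%N then 0 else T k (y, 0).
  have Hsplit : forall N, (2 <= N)%N ->
      \sum_(k < N) T k (y, 0) = T 0%N (y, 0) + T 1%N (y, 0) + \sum_(k < N) Tm k.
    case=> [|[|m]] // _; elim: m => [|m IH].
      by rewrite !big_ord_recr /= !big_ord0 /Tm /= !add0r !addr0.
    by rewrite big_ord_recr IH [in RHS]big_ord_recr /= /Tm /= addrA.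
  apply: (@lim_norm_le K (fun N => \sum_(k < N) T k (y, 0) - T 0%N (y, 0) - T 1%N (y, 0))).
  - apply: cvgB; last exact: cvg_cst.
    apply: cvgB; last exact: cvg_cst.
    exact cv.
  - by rewrite mulr_ge0 ?divr_ge0 ?exprn_ge0 // ltW.
  exists 2%N => // N /= HN.
  rewrite Hsplit //.
  set S := \sum_(k < N) Tm k.
  have -> : T 0%N (y, 0) + T 1%N (y, 0) + S - T 0%N (y, 0) - T 1%N (y, 0) = S.
    by ring.
  apply: le_trans (ler_norm_sum _ _ _) _.
  apply: le_trans (_ : \sum_(k < N) (`|y| ^+ 2 / rho ^+ 2 *
       \sum_(t : k.-tuple ('I_n + 'I_n)) `|cf k t| * `|monom t hs|) <= _); last first.
    have c0 : 0 <= `|y| ^+ 2 / rho ^+ 2 by rewrite divr_ge0 ?exprn_ge0 // ltW.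
    by rewrite -mulr_sumr ler_wpM2l //; exact: HM.
  apply: ler_sum => k _; rewrite /Tm.
  case: ifP => k2.
    rewrite normr0; apply: mulr_ge0; first by rewrite divr_ge0 ?exprn_ge0 // ltW.
    by apply: sumr_ge0 => t _; rewrite mulr_ge0.
  rewrite mulr_sumr; apply: le_trans (ler_norm_sum _ _ _) _.
  apply: ler_sum => t _; rewrite normrM monhs mulrCA ler_wpM2l //.
  apply: le_trans (monom_le t (fun i => pcoord_slice_le y i)) _.
  move/negbT: k2; rewrite -leqNgt => /subnKC <-.
  rewrite !exprD mulrA divfK ?expf_neq0 ?gt_eqF //.
  rewrite ler_wpM2l ?exprn_ge0 //.
  by apply: lerXn2r => //; rewrite nnegrE ?normr_ge0 // ltW.
have T0c : forall h h', T 0%N h = T 0%N h'.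
  by move=> h h'; apply: eq_bigr => t _; rewrite /monom !big_ord0.
have T10 : forall h, T 1%N (h, 0) = lin1 (cf 1%N) h by [].
have Fp : F (x0, a0) = T 0%N (0, 0).
  have := key 0; rewrite normr0 ltW // => /(_ isT).
  rewrite T10 linear0 expr0n /= !mul0r subr0 !addr0 normr_le0 subr_eq0.
  by move/eqP.
have Mr0 : 0 <= M / rho ^+ 2 by rewrite divr_ge0 ?exprn_ge0 // ltW.
have C1 : 0 <= \sum_t `|cf 1%N t| by apply: sumr_ge0 => t _.
apply: (@diff_from_quad K _ _ x0 (lin1 (cf 1%N)) (\sum_t `|cf 1%N t| + M / rho ^+ 2) rho).
- exact: rho0.
- exact: addr_ge0.
- move=> h; apply: le_trans (lin1_le _ _) _.
  by rewrite ler_wpM2r // lerDl.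
- move=> h hh /=.
  rewrite Fp (T0c (0, 0) (h, 0)) [h + x0]addrC -T10.
  have K1 := key h (ltW hh); rewrite addr0 in K1.
  apply: le_trans K1 _.
  have -> : `|h| ^+ 2 / rho ^+ 2 * M = M / rho ^+ 2 * `|h| ^+ 2 by ring.
  by rewrite ler_wpM2r ?exprn_ge0 // lerDr.
Qed.


Lemma deriv_local (K : numFieldType) (V : normedModType K) (f : V -> K) x v c :
  differentiable f x -> (\forall s \near (0:K), f (s *: v + x) = f x + s * c) ->
  'd f x v = c.
Proof.
move=> df H; rewrite -deriveE //; rewrite /derive.
apply: lim_near_cst => //.
near=> h.
have hn : h != 0 by near: h; exact: nbhs_dnbhs_neq.
have Hh : f (h *: v + x) = f x + h * c by near: h; apply: nbhs_dnbhs; exact: H.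
rewrite /= Hh addrC addKr.
by rewrite -[h * c]/(h *: c) scalerA mulVf // scale1r.
Unshelve. all: by end_near.
Qed.

Lemma affine_cvg (K : numFieldType) (V : normedModType K) (v x : V) :
  (fun s : K => s *: v + x) @ 0 --> x.
Proof.
have h1 := @cvgZr_tmp K V K (nbhs (0:K)) (nbhs_filter 0) id 0 v (@cvg_id _ (nbhs (0:K))).
have h2 := @cvgD K V K (nbhs (0:K)) (nbhs_filter 0) _ (fun=> x) _ x h1 (@cvg_cst _ x _ (nbhs (0:K)) (nbhs_filter 0)).
by rewrite scale0r add0r in h2.
Qed.


Lemma eig_dir (R : realType) n (c : 'I_n -> 'I_n -> 'I_n -> cplx R)
  (U : set ('rV[cplx R]_n * 'rV[cplx R]_n)) (HU : open U)
  (l : 'rV[cplx R]_n * 'rV[cplx R]_n -> cplx R)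
  (Hl : locally_analytic U l)
  (Heig : forall p, U p -> pencil_eigenvalue c p.1 p.2 (l p)) x a :
  U (x, a) ->
  'd (fun y => l (y, a)) x a = 1 /\ 'd (fun y => l (y, a)) x x = l (x, a).
Proof.
move=> Uxa.
set f := fun y => l (y, a).
have df : differentiable f x := analytic_slice_diff (Hl _ Uxa).
have [P [P0 HP]] := pencil_poly (formA c x) (formA c a).
have eigP : forall z, pencil_eigenvalue c x a z -> P.[z] = 0.
  by move=> z [mu H]; exact: HP z mu H.
have iso := poly_isolated (l (x, a)) P0.
have fc : {for x, continuous f} := differentiable_continuous df.
have hU := HU _ Uxa.
have Uv : forall v, \forall s \near (0 : cplx R), U (s *: v + x, a).
  move=> v.
  have hc : (fun s : cplx R => (s *: v + x, a)) @ nbhs (0:cplx R) --> (x, a).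
    have t1 := @affine_cvg _ _ v x. have t2 := cvg_pair t1 (@cvg_cst _ a _ (nbhs (0:cplx R)) (nbhs_filter 0)).
    exact: t2.
  exact: hc _ hU.
have fcv : forall v, (fun s : cplx R => f (s *: v + x)) @ nbhs (0:cplx R) --> f x.
  move=> v; exact: (cvg_comp _ _ (@affine_cvg _ _ v x) fc).
split.
  apply: deriv_local => //.
  have ga : (fun s : cplx R => f (s *: a + x) - s) @ nbhs (0:cplx R) --> f x - 0.
    exact: (cvgB (fcv a) cvg_id).
  rewrite subr0 in ga.
  have i1 := ga _ iso.
  near=> s.
  have Us : U (s *: a + x, a) by near: s; exact: Uv a.
  have e1 : pencil_eigenvalue c (x + s *: a) a (f (s *: a + x)).
    by rewrite [x + _]addrC; exact: (Heig _ Us).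
  have e2 := eigP _ (eig_shift e1).
  have i2 : P.[f (s *: a + x) - s] = 0 -> f (s *: a + x) - s = l (x, a).
    by near: s; exact: i1.
  move: (i2 e2) => E2.
  by rewrite mulr1 -[f x]/(l (x, a)) -E2 subrK.
apply: deriv_local => //.
have one : (fun s : cplx R => 1 + s) @ nbhs (0:cplx R) --> ((1 + 0 : cplx R)).
  exact: (@cvgD _ _ _ (nbhs (0:cplx R)) (nbhs_filter 0) _ _ _ _
    (@cvg_cst _ (1 : cplx R) _ (nbhs (0:cplx R)) (nbhs_filter 0)) (@cvg_id _ (nbhs (0:cplx R)))).
rewrite addr0 in one.
have inv := @cvgV _ _ (nbhs (0:cplx R)) (nbhs_filter 0) _ _ (oner_neq0 _) one.
have gx : (fun s => f (s *: x + x) * (1 + s)^-1) @ nbhs (0:cplx R) --> (f x * 1^-1 : cplx R).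
  have hh := (@cvgM _ _ (nbhs (0:cplx R)) (nbhs_filter 0) _ _ _ _ (fcv x) inv).
  exact: hh.
rewrite invr1 mulr1 in gx.
have i1 := gx _ iso.
have Hone := @cvgr_dist_lt _ _ _ _ _ _ _ one _ (@ltr01 (cplx R)).
near=> s.
have s1 : 1 + s != 0.
  have sl : `|1 - (1 + s)| < 1 by near: s; exact: Hone.
  by apply/eqP => E; move: sl; rewrite E subr0 normr1 ltxx.
have Us : U (s *: x + x, a) by near: s; exact: Uv x.
have e1 : pencil_eigenvalue c ((1 + s) *: x) a (f (s *: x + x)).
  by rewrite scalerDl scale1r addrC; exact: (Heig _ Us).
have e2 := eigP _ (eig_scale s1 e1).
have i2 : P.[f (s *: x + x) / (1 + s)] = 0 -> f (s *: x + x) / (1 + s) = l (x, a).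
  by near: s; exact: i1.
move: (i2 e2) => E2.
rewrite -[f x]/(l (x, a)) -E2.
set F := f (s *: x + x).
by rewrite -{1}(divfK s1 F) mulrDr mulr1 [F / _ * s]mulrC.
Unshelve. all: by end_near.
Qed.

Lemma sum_wedge (K : comRingType) n (U V A X : 'I_n -> K) :
  (\sum_i U i * A i) * (\sum_j V j * X j) - (\sum_j U j * X j) * (\sum_i V i * A i)
  = \sum_i \sum_j (U i * V j - U j * V i) * (A i * X j).
Proof.
rewrite mulr_suml [X in _ - X]mulr_suml.
have -> : \sum_i (U i * X i) * (\sum_j V j * A j) = \sum_j \sum_i (U i * X i) * (V j * A j).
  rewrite exchange_big /=; apply: eq_bigr => i _; by rewrite mulr_sumr.
rewrite -sumrB; apply: eq_bigr => i _; rewrite mulr_sumr -sumrB.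
by apply: eq_bigr => j _; ring.
Qed.

Lemma lin_coord (K : numFieldType) n (L : {linear 'rV[K]_n -> K}) (w : 'rV[K]_n) :
  L w = \sum_(k < n) L (delta_mx 0 k) * w 0 k.
Proof.
rewrite {1}(row_sum_delta w) raddf_sum; apply: eq_bigr => k _.
by rewrite mulrC; exact: (linearZZ L (w 0 k) (delta_mx 0 k)).
Qed.

Unset Implicit Arguments.
Set Strict Implicit.

Theorem lemma4 (R : realType) (n : nat) (c : 'I_n -> 'I_n -> 'I_n -> cplx R)
  (Hlie : is_lie_structure c)
  (U : set ('rV[cplx R]_n * 'rV[cplx R]_n)) (HU : open U)
  (l1 l2 : 'rV[cplx R]_n * 'rV[cplx R]_n -> cplx R)
  (Hl1 : locally_analytic U l1) (Hl2 : locally_analytic U l2)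
  (Heig : forall p, U p ->
     [/\ pencil_eigenvalue c p.1 p.2 (l1 p),
         pencil_eigenvalue c p.1 p.2 (l2 p) & l1 p != l2 p]) :
  exists V : set ('rV[cplx R]_n * 'rV[cplx R]_n),
    [/\ open V, V `<=` U,
        (forall O, open O -> O `&` U !=set0 -> O `&` V !=set0) &
        (forall p, V p -> wedge2 (dx l1 p) (dx l2 p) != 0)].
Proof.
exists U; split => //.
move=> [x a] Up.
have [a1 x1] := eig_dir HU Hl1 (fun p Up => let: And3 h _ _ := Heig p Up in h) Up.
have [a2 x2] := eig_dir HU Hl2 (fun p Up => let: And3 _ h _ := Heig p Up in h) Up.
have [_ _ neq] := Heig _ Up.
set u := dx l1 (x, a); set v := dx l2 (x, a).
apply/negP => /eqP W.
have W' : forall i j, u 0 i * v 0 j - u 0 j * v 0 i = 0.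
  move=> i j; move/matrixP: W => /(_ i j).
  rewrite [LHS]mxE => ->; rewrite mxE //.
have pu : forall w : 'rV[cplx R]_n, \sum_k u 0 k * w 0 k = 'd (fun y => l1 (y, a)) x w.
  by move=> w; rewrite [RHS]lin_coord; apply: eq_bigr => k _; rewrite /u /dx mxE.
have pv : forall w : 'rV[cplx R]_n, \sum_k v 0 k * w 0 k = 'd (fun y => l2 (y, a)) x w.
  by move=> w; rewrite [RHS]lin_coord; apply: eq_bigr => k _; rewrite /v /dx mxE.
have : (\sum_i u 0 i * a 0 i) * (\sum_j v 0 j * x 0 j) -
       (\sum_j u 0 j * x 0 j) * (\sum_i v 0 i * a 0 i) = 0.
  refine (etrans (sum_wedge (fun i => u 0 i) (fun i => v 0 i) (fun i => a 0 i) (fun i => x 0 i)) _).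
  apply: big1 => i _; apply: big1 => j _.
  by rewrite W' mul0r.
have e1 := etrans (pu a) a1.
have e2 := etrans (pv x) x2.
have e3 := etrans (pu x) x1.
have e4 := etrans (pv a) a2.
move=> key.
have : 1 * l2 (x, a) - l1 (x, a) * 1 = 0.
  refine (etrans _ key).
  by congr (_ * _ - _ * _); [exact: esym e1|exact: esym e2|exact: esym e3|exact: esym e4].
rewrite mul1r mulr1 => /subr0_eq E.
by move: neq; rewrite E eqxx.


Qed.
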